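(* Let $M = \{ y = \psi(x) \}\subset\mathbb C^n$ be a $\mathcal C^2$-smooth graph at the origin (so $\psi(0)=0$) with $d\psi(0) = 0$. Then for any open set $U$ containing the origin, there exists a holomorphic embedding $\phi \colon \triangle^{n} \to U$ with $0\in\phi(\triangle^n)$ and $\phi(H^1)\cap M=\emptyset$.
   Context: Coordinates on $\mathbb C^n$ are $z=x+iy$ with $x,y\in\mathbb R^n$, and $\psi$ is defined near $0\in\mathbb R^n$ with values in $\mathbb R^n$. $\triangle$ is the open unit disc, $G^{k}(r,s):=s\triangle^{k}\setminus r\overline\triangle^{k}$, and $H^1:=(\triangle\times G^{n-1}(1/2,1))\cup(\tfrac12\triangle\times\triangle^{n-1})$ is the standard $1$-Hartogs figure. *)

(* Defs.v *)
From HB Require Import structures.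
From mathcomp Require Import all_boot all_order all_algebra.
From mathcomp Require Import all_classical all_reals all_analysis.
From mathcomp Require Import complex.
Unset Printing Implicit Defensive.
Import Order.TTheory GRing.Theory Num.Theory ComplexField numFieldNormedType.Exports.
Local Open Scope classical_set_scope.
Local Open Scope ring_scope.

(* C^n as row vectors over C = R[i], with C seen as a numFieldType so that
   the normed/topological structure of MathComp-Analysis applies. *)
Notation Cvec R n := ('rV[(complex (Real.sort R) : numFieldType)]_n).

Section Defs.
Variable R : realType.
Local Notation C := (complex (Real.sort R) : numFieldType).

Definition reC {n} (z : 'rV[C]_n) : 'rV[R]_n := map_mx (@complex.Re R) z.
Definition imC {n} (z : 'rV[C]_n) : 'rV[R]_n := map_mx (@complex.Im R) z.

Definition polydisc n (s : C) : set 'rV[C]_n :=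
  [set z | forall k : 'I_n, `|z ord0 k| < s].
Definition cpolydisc n (r : C) : set 'rV[C]_n :=
  [set z | forall k : 'I_n, `|z ord0 k| <= r].
Definition Gshell n (r s : C) : set 'rV[C]_n :=
  polydisc n s `\` cpolydisc n r.

Definition first_coord {n} (z : 'rV[C]_n) : C :=
  \big[+%R/0]_(k < n | val k == 0%N) z ord0 k.
Definition rest_coords {n} (z : 'rV[C]_n) : 'rV[C]_n.-1 :=
  \row_(j < n.-1) (if insub (j.+1)%N is Some k then z ord0 k else 0).

Definition hartogs1 n : set 'rV[C]_n :=
  [set z | (`|first_coord z| < 1 /\ Gshell n.-1 2^-1 1 (rest_coords z))
        \/ (`|first_coord z| < 2^-1 /\ polydisc n.-1 1 (rest_coords z))].

Definition C2_on {n} (V : set 'rV[R]_n) (psi : 'rV[R]_n -> 'rV[R]_n) : Prop :=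
  (forall x, V x -> differentiable psi x) /\
  (forall (i : 'I_n) x, V x -> differentiable ('D_('e_i) psi) x) /\
  (forall (i j : 'I_n) x, V x ->
     {for x, continuous ('D_('e_j) ('D_('e_i) psi))}).

Definition graph_set {n} (V : set 'rV[R]_n) (psi : 'rV[R]_n -> 'rV[R]_n)
  : set 'rV[C]_n := [set z | V (reC z) /\ imC z = psi (reC z)].

(* phi is a holomorphic embedding of the open set D into C^n:
   phi is holomorphic (complex Frechet differentiable) on D, its complex
   differential is injective at every point of D, and phi is a homeomorphism
   of D onto its image (it has a left inverse on D that is continuous on
   phi(D)). *)
Definition holomorphic_embedding {n} (D : set 'rV[C]_n)
  (phi : 'rV[C]_n -> 'rV[C]_n) : Prop :=
  (forall z, D z -> differentiable phi z) /\
  (forall z, D z -> injective ('d phi z)) /\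
  (exists g : 'rV[C]_n -> 'rV[C]_n,
     (forall z, D z -> g (phi z) = z) /\ {within phi @` D, continuous g}).

End Defs.
Arguments reC {R n} z.
Arguments imC {R n} z.
Arguments polydisc {R} n s.
Arguments cpolydisc {R} n r.
Arguments Gshell {R} n r s.
Arguments first_coord {R n} z.
Arguments rest_coords {R n} z.
Arguments hartogs1 {R} n.
Arguments C2_on {R n} V psi.
Arguments graph_set {R n} V psi.
Arguments holomorphic_embedding {R n} D phi.

(* Main.v *)
Require Import Defs.
From HB Require Import structures.
From mathcomp Require Import all_boot all_order all_algebra.
From mathcomp Require Import all_classical all_reals all_analysis.
From mathcomp Require Import complex.
From mathcomp Require Import ring lra.
Import Order.TTheory GRing.Theory Num.Theory ComplexField numFieldNormedType.Exports.
Local Open Scope classical_set_scope.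
Local Open Scope ring_scope.

Section Alg.
Variable R : realType.
Local Notation C := (complex (Real.sort R) : numFieldType).
Variable m : nat.
Local Notation n := m.+1.

Definition e0v : 'rV[C]_n := \row_(j < n) ((j == ord0)%:R : C).
Definition Qf (z : 'rV[C]_n) : C :=
  \sum_(j < n) ((j != ord0)%:R * (z ord0 j * z ord0 j)).
Definition c34 : C := 3%:R / 4%:R.
Definition hf (z : 'rV[C]_n) : C :=
  'i%C * (c34 - z ord0 ord0 + 2%:R * Qf z) - z ord0 ord0.
Definition Ff (z : 'rV[C]_n) : 'rV[C]_n := z + hf z *: e0v.
Definition kf (u : 'rV[C]_n) : C :=
  c34 + 2%:R * Qf u + 'i%C * u ord0 ord0 - u ord0 ord0.
Definition Gf (u : 'rV[C]_n) : 'rV[C]_n := u + kf u *: e0v.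

Lemma Qf_e0 z a : Qf (z + a *: e0v) = Qf z.
Proof.
rewrite /Qf; apply: eq_bigr => j _; rewrite !mxE.
case: (eqVneq j ord0) => [->|jn0]; first by rewrite !mul0r.
by rewrite mulr0 addr0.
Qed.

Lemma alg_id (K : comRingType) (i z0 Q c : K) : i * i = -1 ->
  z0 + (i * (c - z0 + 2%:R * Q) - z0) +
  (c + 2%:R * Q + i * (z0 + (i * (c - z0 + 2%:R * Q) - z0)) -
   (z0 + (i * (c - z0 + 2%:R * Q) - z0))) = z0.
Proof.
move=> ii; apply/eqP; rewrite -subr_eq0.
have -> : z0 + (i * (c - z0 + 2%:R * Q) - z0) +
  (c + 2%:R * Q + i * (z0 + (i * (c - z0 + 2%:R * Q) - z0)) -
   (z0 + (i * (c - z0 + 2%:R * Q) - z0))) - z0 = (i * i + 1) * (c - z0 + 2%:R * Q)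
  by ring.
by rewrite ii addNr mul0r.
Qed.

Lemma GfK z : Gf (Ff z) = z.
Proof.
rewrite /Gf /kf /Ff Qf_e0; apply/rowP => j; rewrite !mxE.
case: eqP => [->|]; last by rewrite !mulr0 !addr0.
rewrite eqxx /= mulr1n !mulr1 /hf.
apply: alg_id; by rewrite -expr2 sqr_i.
Qed.

Lemma dcoord (z : 'rV[C]_n) j : differentiable (fun w : 'rV[C]_n => w ord0 j) z.
Proof. exact: differentiable_coord. Qed.

Lemma dQf z : differentiable Qf z.
Proof.
have -> : Qf = \sum_(j < n) (fun w : 'rV[C]_n =>
   ((j != ord0)%:R : C) * (w ord0 j * w ord0 j)).
  by rewrite fct_sumE.
apply: differentiable_sum => j.
have -> : (fun w : 'rV[C]_n => ((j != ord0)%:R : C) * (w ord0 j * w ord0 j)) =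
  (cst ((j != ord0)%:R : C)) * ((fun w : 'rV[C]_n => w ord0 j) * (fun w : 'rV[C]_n => w ord0 j)).
  by [].
apply: differentiableM; first exact: differentiable_cst.
by apply: differentiableM; apply: dcoord.
Qed.

Lemma dhf z : differentiable hf z.
Proof.
have -> : hf = (cst 'i%C) * (cst c34 - (fun w : 'rV[C]_n => w ord0 ord0) +
   cst 2%:R * Qf) - (fun w : 'rV[C]_n => w ord0 ord0) by [].
apply: differentiableB; last exact: dcoord.
apply: differentiableM; first exact: differentiable_cst.
apply: differentiableD; last first.
  by apply: differentiableM; [exact: differentiable_cst|exact: dQf].
by apply: differentiableB; [exact: differentiable_cst|exact: dcoord].
Qed.

Lemma dkf z : differentiable kf z.
Proof.
have -> : kf = cst c34 + cst 2%:R * Qf + (cst 'i%C) * (fun w : 'rV[C]_n => w ord0 ord0)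
   - (fun w : 'rV[C]_n => w ord0 ord0) by [].
apply: differentiableB; last exact: dcoord.
apply: differentiableD; last first.
  by apply: differentiableM; [exact: differentiable_cst|exact: dcoord].
apply: differentiableD; first exact: differentiable_cst.
by apply: differentiableM; [exact: differentiable_cst|exact: dQf].
Qed.

Lemma dFf z : differentiable Ff z.
Proof.
have -> : Ff = id + (fun w => hf w *: e0v) by [].
apply: differentiableD => //.
exact/differentiableZl/dhf.
Qed.

Lemma dGf z : differentiable Gf z.
Proof.
have -> : Gf = id + (fun w => kf w *: e0v) by [].
apply: differentiableD => //.
exact/differentiableZl/dkf.
Qed.

Definition phif (eps : C) (z : 'rV[C]_n) : 'rV[C]_n := eps *: Ff z.
Definition ginv (eps : C) (w : 'rV[C]_n) : 'rV[C]_n := Gf (eps^-1 *: w).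

Lemma ginvK eps z : eps != 0 -> ginv eps (phif eps z) = z.
Proof. by move=> e0v; rewrite /ginv /phif scalerA mulVf // scale1r GfK. Qed.

Lemma dphif eps z : differentiable (phif eps) z.
Proof.
have -> : phif eps = eps *: Ff by [].
exact/differentiableZ/dFf.
Qed.

Lemma dginv eps z : differentiable (ginv eps) z.
Proof.
have -> : ginv eps = Gf \o (eps^-1 *: id) by [].
apply: differentiable_comp; last exact: dGf.
exact: differentiableZ.
Qed.

Lemma phif_emb eps (D : set 'rV[C]_n) : eps != 0 -> holomorphic_embedding D (phif eps).
Proof.
move=> e0v; split; first by move=> z _; exact: dphif.
split.
  move=> z _ u v huv.
  have E := diff_comp (dphif eps z) (dginv eps (phif eps z)).
  have gid : ginv eps \o phif eps = id by apply/funext => w /=; rewrite ginvK.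
  Timeout 20 rewrite gid in E.
  have did : ('d (@id 'rV[C]_n) z : _ -> _) = id.
    Timeout 20 exact: (@diff_val _ _ _ _ _ _ _ (is_diff_id z)).
  have Eu := etrans (esym (congr1 (fun f => f u) did)) (congr1 (fun f => f u) E).
  have Ev := etrans (esym (congr1 (fun f => f v) did)) (congr1 (fun f => f v) E).
  exact: (etrans Eu (etrans (congr1 ('d (ginv eps) (phif eps z)) huv) (esym Ev))).
exists (ginv eps); split; first by move=> z _; exact: ginvK.
apply: continuous_subspaceT => w.
exact: differentiable_continuous (dginv eps w).
Qed.
End Alg.
Arguments e0v {R m}.
Arguments Qf {R m} z.
Arguments c34 {R}.
Arguments hf {R m} z.
Arguments Ff {R m} z.
Arguments kf {R m} u.
Arguments Gf {R m} u.
Arguments phif {R m} eps z.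
Arguments ginv {R m} eps w.


Section RN.
Variable R : realType.
Variable k : nat.

Lemma rv_le_norm (x : 'rV[R]_k) j : `|x ord0 j| <= `|x|.
Proof.
rewrite [leRHS]/Num.norm /= mx_normrE.
exact: (le_bigmax _ (fun ij : 'I_1 * 'I_k => `|x ij.1 ij.2|) (ord0, j)).
Qed.

Lemma rv_norm_le (x : 'rV[R]_k) b : 0 <= b -> (forall j, `|x ord0 j| <= b) -> `|x| <= b.
Proof.
move=> b0 H; rewrite [leLHS]/Num.norm /= mx_normrE.
apply: bigmax_le => // -[i j] _ /=; rewrite (ord1 i); exact: H.
Qed.

Lemma psi_small (psi : 'rV[R]_k -> 'rV[R]_k) : differentiable psi 0 -> psi 0 = 0 ->
  (forall v, 'd psi 0 v = 0) -> forall eta, 0 < eta ->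
  exists2 d, 0 < d & forall x, `|x| < d -> `|psi x| <= eta * `|x|.
Proof.
move=> dp p0 dp0 eta eta0.
have /eqaddoP H := diff_locally dp.
have /nbhs_norm0P [d d0 Hd] := H eta eta0.
exists d => // x xd; have := Hd x xd.
by rewrite !fctE /= addr0 p0 dp0 add0r subr0.
Qed.
End RN.
Arguments psi_small {R k psi}.
Arguments rv_le_norm {R k}.
Arguments rv_norm_le {R k}.


Section CX.
Variable R : realType.
Local Notation C := (complex (Real.sort R) : numFieldType).
Local Notation Re := (@complex.Re (Real.sort R)).
Local Notation Im := (@complex.Im (Real.sort R)).

Lemma cReD (x y : C) : Re (x + y) = Re x + Re y. Proof. by case: x; case: y. Qed.
Lemma cImD (x y : C) : Im (x + y) = Im x + Im y. Proof. by case: x; case: y. Qed.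
Lemma cReN (x : C) : Re (- x) = - Re x. Proof. by case: x. Qed.
Lemma cImN (x : C) : Im (- x) = - Im x. Proof. by case: x. Qed.
Lemma cReB (x y : C) : Re (x - y) = Re x - Re y. Proof. by rewrite cReD cReN. Qed.
Lemma cImB (x y : C) : Im (x - y) = Im x - Im y. Proof. by rewrite cImD cImN. Qed.
Lemma cReM (x y : C) : Re (x * y) = Re x * Re y - Im x * Im y. Proof. by case: x; case: y. Qed.
Lemma cImM (x y : C) : Im (x * y) = Re x * Im y + Im x * Re y. Proof. by case: x; case: y. Qed.
Lemma cRe0 : Re (0 : C) = 0. Proof. by []. Qed.
Lemma cIm0 : Im (0 : C) = 0. Proof. by []. Qed.
Lemma cRe_sum I (r : seq I) P (F : I -> C) : Re (\sum_(i <- r | P i) F i) = \sum_(i <- r | P i) Re (F i).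
Proof. exact: (big_morph _ cReD cRe0). Qed.
Lemma cIm_sum I (r : seq I) P (F : I -> C) : Im (\sum_(i <- r | P i) F i) = \sum_(i <- r | P i) Im (F i).
Proof. exact: (big_morph _ cImD cIm0). Qed.
Lemma cRe_r (x : R) : Re ((x%:C)%C : C) = x. Proof. by []. Qed.
Lemma cIm_r (x : R) : Im ((x%:C)%C : C) = 0. Proof. by []. Qed.
Lemma cnatC k : (k%:R : C) = ((k%:R : R)%:C)%C. Proof. by rewrite rmorph_nat. Qed.
Lemma cRe_nat k : Re (k%:R : C) = k%:R. Proof. by rewrite cnatC. Qed.
Lemma cIm_nat k : Im (k%:R : C) = 0. Proof. by rewrite cnatC. Qed.
Lemma cRe_i : Re ('i%C : C) = 0. Proof. by []. Qed.
Lemma cIm_i : Im ('i%C : C) = 1. Proof. by []. Qed.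
Lemma cc34E : ((@c34 R)) = (((3%:R / 4%:R : R))%:C)%C.
Proof. by rewrite /c34 fmorph_div !rmorph_nat. Qed.
Lemma cRe_c34 : Re ((@c34 R)) = 3%:R / 4%:R. Proof. by rewrite cc34E. Qed.
Lemma cIm_c34 : Im ((@c34 R)) = 0. Proof. by rewrite cc34E. Qed.
Lemma cone_C : (1 : C) = ((1 : R)%:C)%C. Proof. by []. Qed.
Lemma chalf_C : ((2 : C)^-1) = ((2^-1 : R)%:C)%C.
Proof. by rewrite fmorphV rmorph_nat. Qed.

Lemma cnorm_ltP (z : C) (y : R) : 0 <= y ->
  (`|z| < (y%:C)%C) <-> (Re z ^+ 2 + Im z ^+ 2 < y ^+ 2).
Proof.
move=> y0; rewrite normc_def ltcR.
have s0 : 0 <= Re z ^+ 2 + Im z ^+ 2 by rewrite addr_ge0 // sqr_ge0.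
have := sqr_sqrtr s0; have := sqrtr_ge0 (Re z ^+ 2 + Im z ^+ 2).
set t := Num.sqrt _ => t0 tE; rewrite -tE; split => h; nra.
Qed.

Lemma cnorm_nleP (z : C) (y : R) : 0 <= y ->
  ~ (`|z| <= (y%:C)%C) -> y ^+ 2 < Re z ^+ 2 + Im z ^+ 2.
Proof.
move=> y0; rewrite normc_def lecR.
have s0 : 0 <= Re z ^+ 2 + Im z ^+ 2 by rewrite addr_ge0 // sqr_ge0.
have := sqr_sqrtr s0; have := sqrtr_ge0 (Re z ^+ 2 + Im z ^+ 2).
set t := Num.sqrt _ => t0 tE; rewrite -tE => /negP; rewrite -ltNge => h; nra.
Qed.
End CX.


Section W.
Variable R : realType.
Local Notation C := (complex (Real.sort R) : numFieldType).
Local Notation Re := (@complex.Re (Real.sort R)).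
Local Notation Im := (@complex.Im (Real.sort R)).
Variable m : nat.
Local Notation T := (m.+1%:R : R).

Lemma phif_e0 (eps : C) (z : 'rV[C]_m.+1) :
  phif eps z ord0 ord0 = eps * ('i%C * ((@c34 R) - z ord0 ord0 + 2%:R * Qf z)).
Proof. by rewrite /phif /Ff !mxE eqxx /= mulr1n mulr1 /hf addrC subrK. Qed.

Lemma phif_ej (eps : C) (z : 'rV[C]_m.+1) j : j != ord0 -> phif eps z ord0 j = eps * z ord0 j.
Proof. by move=> jn; rewrite /phif /Ff !mxE (negbTE jn) /= mulr0 addr0. Qed.

Lemma ReQ (z : 'rV[C]_m.+1) : Re (Qf z) =
  \sum_(j < m.+1) ((j != ord0)%:R * (Re (z ord0 j) ^+ 2 - Im (z ord0 j) ^+ 2)).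
Proof.
rewrite /Qf cRe_sum; apply: eq_bigr => j _.
by rewrite cReM cRe_nat cIm_nat mul0r subr0 cReM !expr2.
Qed.

Lemma ImQ (z : 'rV[C]_m.+1) : Im (Qf z) =
  \sum_(j < m.+1) ((j != ord0)%:R * (2 * Re (z ord0 j) * Im (z ord0 j))).
Proof.
rewrite /Qf cIm_sum; apply: eq_bigr => j _.
rewrite cImM cRe_nat cIm_nat mul0r addr0 cImM; ring.
Qed.

Lemma sumT : \sum_(j < m.+1) (1 : R) = T.
Proof. by rewrite sumr_const card_ord. Qed.

Lemma QfB (z : 'rV[C]_m.+1) : (forall j, Re (z ord0 j) ^+ 2 + Im (z ord0 j) ^+ 2 < 1) ->
  `|Re (Qf z)| <= T /\ `|Im (Qf z)| <= T.
Proof.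
move=> H; split; [rewrite ReQ|rewrite ImQ];
  (apply: le_trans (ler_norm_sum _ _ _) _; rewrite -sumT; apply: ler_sum => j _);
  (case: (eqVneq j ord0) => [->|jn]; [by rewrite /= mulr0n mul0r normr0 ler01|]);
  rewrite /= mulr1n mul1r ler_norml; have := H j;
  have := sqr_ge0 (Re (z ord0 j)); have := sqr_ge0 (Im (z ord0 j));
  have := sqr_ge0 (Re (z ord0 j) + Im (z ord0 j));
  have := sqr_ge0 (Re (z ord0 j) - Im (z ord0 j));
  move=> *; apply/andP; split; nra.
Qed.

Lemma Imw0 (e : R) (z : 'rV[C]_m.+1) : Im (phif (e%:C)%C z ord0 ord0) =
  e * (3%:R / 4%:R - Re (z ord0 ord0) + 2 * Re (Qf z)).
Proof.
rewrite phif_e0 cc34E (cnatC R 2) !(cImM, cReM, cReD, cImD, cReB, cImB, cReN, cImN, cRe_r, cIm_r, cRe_i, cIm_i).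
rewrite -[Algebra.hasZero.zero _]/(0 : R).
ring.
Qed.

Lemma Rew0 (e : R) (z : 'rV[C]_m.+1) : Re (phif (e%:C)%C z ord0 ord0) =
  e * (Im (z ord0 ord0) - 2 * Im (Qf z)).
Proof.
rewrite phif_e0 cc34E (cnatC R 2) !(cImM, cReM, cReD, cImD, cReB, cImB, cReN, cImN, cRe_r, cIm_r, cRe_i, cIm_i).
rewrite -[Algebra.hasZero.zero _]/(0 : R).
ring.
Qed.

Lemma Rewj (e : R) (z : 'rV[C]_m.+1) j : j != ord0 -> Re (phif (e%:C)%C z ord0 j) = e * Re (z ord0 j).
Proof. by move=> jn; rewrite phif_ej // cReM cRe_r cIm_r mul0r subr0. Qed.

Lemma Imwj (e : R) (z : 'rV[C]_m.+1) j : j != ord0 -> Im (phif (e%:C)%C z ord0 j) = e * Im (z ord0 j).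
Proof. by move=> jn; rewrite phif_ej // cImM cRe_r cIm_r mul0r addr0. Qed.

Lemma wRI (e : R) (z : 'rV[C]_m.+1) j : 0 <= e ->
  (forall k, Re (z ord0 k) ^+ 2 + Im (z ord0 k) ^+ 2 < 1) ->
  `|Re (phif (e%:C)%C z ord0 j)| + `|Im (phif (e%:C)%C z ord0 j)| <= e * (8 * T).
Proof.
move=> e0 H; have T1 : 1 <= T by rewrite ler1n.
have Hk := H j; have H0 := H ord0.
have := sqr_ge0 (Re (z ord0 j)); have := sqr_ge0 (Im (z ord0 j)).
have := sqr_ge0 (Re (z ord0 ord0)); have := sqr_ge0 (Im (z ord0 ord0)).
move=> s1 s2 s3 s4.
have [a1 a2] : -1 <= Re (z ord0 j) <= 1 /\ -1 <= Re (z ord0 ord0) <= 1.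
  by split; apply/andP; split; nra.
have [b1 b2] : -1 <= Im (z ord0 j) <= 1 /\ -1 <= Im (z ord0 ord0) <= 1.
  by split; apply/andP; split; nra.
case: (eqVneq j ord0) => [->|jn].
  rewrite Rew0 Imw0; have [QR QI] := QfB z H.
  move: QR QI; rewrite !ler_norml => /andP[q1 q2] /andP[q3 q4].
  move/andP: a2 => [a3 a4]; move/andP: b2 => [b3 b4].
  set X := e * (Im _ - _); set Y := e * (_ - _ + _).
  have hX : `|X| <= e * (1 + 2 * T).
    by rewrite /X normrM (ger0_norm e0); apply: ler_wpM2l => //; rewrite ler_norml; apply/andP; split; lra.
  have hY : `|Y| <= e * (2 + 2 * T).
    by rewrite /Y normrM (ger0_norm e0); apply: ler_wpM2l => //; rewrite ler_norml; apply/andP; split; lra.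
  apply: (le_trans (lerD hX hY)); nra.
rewrite Rewj // Imwj //.
move/andP: a1 => [a3 a4]; move/andP: b1 => [b3 b4].
rewrite !normrM (ger0_norm e0).
have h1 : `|Re (z ord0 j)| <= 1 by rewrite ler_norml; apply/andP; split.
have h2 : `|Im (z ord0 j)| <= 1 by rewrite ler_norml; apply/andP; split.
have := normr_ge0 (Re (z ord0 j)); have := normr_ge0 (Im (z ord0 j)).
move=> *; nra.
Qed.
End W.
Arguments wRI {R m}. Arguments Imw0 {R m}. Arguments Rew0 {R m}. Arguments Rewj {R m}.
Arguments Imwj {R m}. Arguments ReQ {R m}. Arguments ImQ {R m}. Arguments QfB {R m}.
Arguments phif_e0 {R m}. Arguments phif_ej {R m}.


Section F.
Variable R : realType.
Local Notation C := (complex (Real.sort R) : numFieldType).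
Local Notation Re := (@complex.Re (Real.sort R)).
Local Notation Im := (@complex.Im (Real.sort R)).

Lemma final_real (T tau a0 b0 Sa Sb : R) : 1 <= T -> tau * (16 * T) = 1 ->
  Sb <= T * tau ^+ 2 -> 0 <= Sa -> `|3%:R / 4%:R - a0 + 2 * (Sa - Sb)| <= tau ->
  a0 ^+ 2 + b0 ^+ 2 < 1 ->
  (a0 ^+ 2 + b0 ^+ 2 < 4^-1 \/
   exists ak bk, ak ^+ 2 <= Sa /\ bk ^+ 2 <= tau ^+ 2 /\ 4^-1 < ak ^+ 2 + bk ^+ 2) -> False.
Proof.
move=> T1 tT Sb1 Sa0; rewrite ler_norml => /andP[h1 h2] hab.
have tau0 : 0 < tau.
  have : 0 < tau * (16 * T) by rewrite tT.
  by rewrite pmulr_lgt0 // mulr_gt0 // (lt_le_trans _ T1).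
have tle : tau <= 16^-1 by nra.
have Tt : T * tau ^+ 2 = tau / 16.
  have -> : T * tau ^+ 2 = tau * (tau * (16 * T)) / 16 by field.
  by rewrite tT mulr1.
rewrite Tt in Sb1.
have s0 := sqr_ge0 a0; have s1 := sqr_ge0 b0.
have a01 : a0 < 1 by nra.
move=> [ha|[ak [bk [hak [hbk hk]]]]].
  have : a0 < 2^-1 by nra.
  lra.
have := sqr_ge0 tau; nra.
Qed.

Variable m : nat.

Lemma fcE (z : 'rV[C]_m.+1) : first_coord z = z ord0 ord0.
Proof. by rewrite /first_coord (big_pred1 ord0). Qed.

Lemma rcE (z : 'rV[C]_m.+1) j : rest_coords z ord0 j = z ord0 (lift ord0 j).
Proof.
rewrite /rest_coords mxE; case: insubP => [k _ kE|]; last by rewrite ltnS ltn_ord.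
by congr (z ord0 _); apply/val_inj; rewrite kE.
Qed.

Lemma lt1P (x : C) : `|x| < 1 <-> Re x ^+ 2 + Im x ^+ 2 < 1.
Proof. by rewrite cone_C cnorm_ltP // expr1n. Qed.

Lemma lthalfP (x : C) : `|x| < 2^-1 <-> Re x ^+ 2 + Im x ^+ 2 < 4^-1.
Proof.
rewrite chalf_C cnorm_ltP ?invr_ge0 ?ler0n //.
have -> : (2^-1 : R) ^+ 2 = 4^-1 by rewrite expr2; field.
by [].
Qed.

Lemma hartogsE (z : 'rV[C]_m.+1) : hartogs1 m.+1 z ->
  (forall k, Re (z ord0 k) ^+ 2 + Im (z ord0 k) ^+ 2 < 1) /\
  (Re (z ord0 ord0) ^+ 2 + Im (z ord0 ord0) ^+ 2 < 4^-1 \/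
   exists k, k != ord0 /\ 4^-1 < Re (z ord0 k) ^+ 2 + Im (z ord0 k) ^+ 2).
Proof.
rewrite /hartogs1 /= fcE => Hz.
have h1 : `|z ord0 ord0| < 1.
  case: Hz => [[]//|[h _]]; apply: lt_trans h _.
  by rewrite chalf_C cone_C ltcR invf_lt1 ?ltr0n // ltr1n.
have hp : polydisc m 1 (rest_coords z) by case: Hz => [[_ []]|[]].
split.
  move=> k; case: (unliftP ord0 k) => [j ->|->]; last exact/lt1P.
  by apply/lt1P; rewrite -rcE; exact: hp.
case: Hz => [[_ [_ hnc]]|[h _]]; last by left; exact/lthalfP.
right; have /existsNP [j hj] := hnc.
exists (lift ord0 j); split; first by rewrite eq_sym; exact: neq_lift.
rewrite -rcE; move: hj; rewrite chalf_C => /cnorm_nleP.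
have -> : (2^-1 : R) ^+ 2 = 4^-1 by rewrite expr2; field.
by apply; rewrite invr_ge0 ler0n.
Qed.
End F.
Arguments fcE {R m}. Arguments rcE {R m}. Arguments lt1P {R}. Arguments lthalfP {R}.
Arguments hartogsE {R m}. Arguments final_real {R}.


Lemma ballE (R : realType) m (w : 'rV[(complex (Real.sort R) : numFieldType)]_m.+1) r :
  0 < r -> (forall j, `|w ord0 j| < r) -> ball 0 r w.
Proof.
move=> r0 H; split => // i j.
rewrite (ord1 i) -ball_normE /= mxE sub0r normrN; exact: H.
Qed.

Lemma phif_star (R : realType) m (eps : (complex (Real.sort R) : numFieldType)) :
  phif eps (c34 *: (e0v : 'rV[(complex (Real.sort R) : numFieldType)]_m.+1)) = 0.
Proof.
have Q0 : Qf (c34 *: (e0v : 'rV[(complex (Real.sort R) : numFieldType)]_m.+1)) = 0.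
  rewrite /Qf big1 // => j _; case: (eqVneq j ord0) => [->|jn].
    by rewrite /= mulr0n mul0r.
  by rewrite !mxE (negbTE jn) /= mulr0 mul0r mulr0.
have z00 : (c34 *: (e0v : 'rV[(complex (Real.sort R) : numFieldType)]_m.+1)) ord0 ord0 = c34.
  by rewrite !mxE eqxx /= mulr1n mulr1.
rewrite /phif /Ff /hf Q0 z00 mulr0 addr0 subrr mulr0 sub0r scaleNr subrr scaler0 //.
Qed.

Theorem lemma2p7 (R : realType) (n : nat) (n_ge1 : (1 <= n)%N)
  (V : set 'rV[R]_n) (psi : 'rV[R]_n -> 'rV[R]_n) :
  open V -> V 0 -> C2_on V psi -> psi 0 = 0 -> (forall v, 'd psi 0 v = 0) ->
  forall U : set (Cvec R n), open U -> U 0 ->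
  exists phi : Cvec R n -> Cvec R n,
    [/\ holomorphic_embedding (polydisc n 1) phi,
        phi @` polydisc n 1 `<=` U,
        (phi @` polydisc n 1) 0
      & phi @` hartogs1 n `&` graph_set V psi = set0].
Proof.
case: n n_ge1 V psi => // m _ V psi oV V0 [dpsi _] psi0 dpsi0 U oU U0.
have dp0 : differentiable psi 0 := dpsi 0 V0.
pose T : R := m.+1%:R.
have T1 : 1 <= T by rewrite ler1n.
have T0 : 0 < T by apply: lt_le_trans ltr01 T1.
pose tau : R := (16 * T)^-1.
have tau0 : 0 < tau by rewrite invr_gt0 mulr_gt0 // ltr0n.
have tT : tau * (16 * T) = 1 by rewrite mulVf // gt_eqF // mulr_gt0 // ltr0n.
pose N : R := 8 * T.
have N0 : 0 < N by rewrite mulr_gt0 // ltr0n.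
pose eta : R := tau / N.
have eta0 : 0 < eta by rewrite divr_gt0.
have [d d0 Hd] := psi_small dp0 psi0 dpsi0 eta eta0.
have [r r0 rU] : exists2 r : (complex (Real.sort R) : numFieldType), 0 < r &
    ball (0 : 'rV[(complex (Real.sort R) : numFieldType)]_m.+1) r `<=` U.
  have : nbhs (0 : 'rV[(complex (Real.sort R) : numFieldType)]_m.+1) U.
    by apply: open_nbhs_nbhs; split.
  by move=> /nbhs_ballP [r r0 H]; exists r.
have [rr rr0 rE] : exists2 rr : R, 0 < rr & r = (rr%:C)%C.
  move: r0; rewrite ltcE => /andP[/eqP i0 re0]; exists (complex.Re r) => //.
  by case: r i0 {rU re0} => a b /= ->.
pose rho := Num.min d rr.
have rho0 : 0 < rho by rewrite lt_min d0 rr0.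
have rd : rho <= d by rewrite ge_min lexx.
have rr' : rho <= rr by rewrite ge_min lexx orbT.
pose e : R := rho / (2 * N).
have e0 : 0 < e by rewrite divr_gt0 // mulr_gt0.
have eN : e * N = rho / 2 by rewrite /e; field; rewrite gt_eqF.
have eNd : e * N < d by rewrite eN; lra.
have eNr : e * N < rr by rewrite eN; lra.
exists (phif (e%:C)%C).
split.
- apply: phif_emb; apply/eqP => h.
  have : e = 0 := congr1 (@complex.Re _) h.
  lra.
- move=> _ [z Hz <-]; apply: rU; apply: ballE => // j.
  rewrite rE cnorm_ltP ?(ltW rr0) //.
  have Hp : forall k, complex.Re (z ord0 k) ^+ 2 + complex.Im (z ord0 k) ^+ 2 < 1.
    by move=> k; apply/lt1P; exact: Hz.
  have := wRI e z j (ltW e0) Hp.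
  rewrite -[complex.Re _ ^+ 2](real_normK (num_real _)) -[complex.Im _ ^+ 2](real_normK (num_real _)).
  have := normr_ge0 (complex.Re (phif (e%:C)%C z ord0 j)).
  have := normr_ge0 (complex.Im (phif (e%:C)%C z ord0 j)).
  move=> hv hu h; have h2 := le_lt_trans h eNr.
  set u := `|_| in hu h2 *; set v := `|_| in hv h2 *.
  nra.
- exists (c34 *: @e0v _ m); last exact: phif_star.
  move=> k; apply/lt1P; rewrite !mxE; case: (k == ord0).
    rewrite -[true%:R]/(1%:R) mulr1n mulr1 cc34E /= expr2 expr2; lra.
  by rewrite -[false%:R]/(0%:R) mulr0n mulr0 cRe0 cIm0 !expr2 mulr0 addr0 ltr01.
- rewrite -subset0 => _ [[z Hz <-] [_ Hy]].
  have [Hp Hc] := hartogsE z Hz.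
  set w := phif (e%:C)%C z in Hy *.
  have Hx : `|reC w| <= e * N.
    apply: rv_norm_le; first by rewrite ltW // mulr_gt0.
    move=> j; rewrite mxE; have := wRI e z j (ltW e0) Hp.
    have := normr_ge0 (complex.Im (w ord0 j)); rewrite -/w /N /T; lra.
  have Hpsi := Hd _ (le_lt_trans Hx eNd).
  have HI : forall j, `|complex.Im (w ord0 j)| <= tau * e.
    move=> j; have E : complex.Im (w ord0 j) = psi (reC w) ord0 j.
      by rewrite -Hy /imC [RHS]mxE.
    rewrite E.
    apply: le_trans (rv_le_norm _ j) _; apply: le_trans Hpsi _.
    apply: le_trans (ler_wpM2l (ltW eta0) Hx) _.
    have -> : eta * (e * N) = tau * e by rewrite /eta; field; rewrite gt_eqF.
    by [].
  have Hb : forall j, j != ord0 -> `|complex.Im (z ord0 j)| <= tau.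
    move=> j jn; have := HI j; rewrite /w Imwj // normrM (gtr0_norm e0) mulrC.
    by rewrite ler_pM2r.
  have H0 := HI ord0; rewrite /w Imw0 normrM (gtr0_norm e0) mulrC ler_pM2r // in H0.
  pose Sa := \sum_(j < m.+1) ((j != ord0)%:R * complex.Re (z ord0 j) ^+ 2).
  pose Sb := \sum_(j < m.+1) ((j != ord0)%:R * complex.Im (z ord0 j) ^+ 2).
  have QE : complex.Re (Qf z) = Sa - Sb.
    by rewrite ReQ /Sa /Sb -sumrB; apply: eq_bigr => j _; rewrite mulrBr.
  rewrite QE in H0.
  have Sa0 : 0 <= Sa by apply: sumr_ge0 => j _; rewrite mulr_ge0 ?ler0n ?sqr_ge0.
  have Sb1 : Sb <= T * tau ^+ 2.
    have sE : \sum_(j < m.+1) tau ^+ 2 = T * tau ^+ 2.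
      by rewrite sumr_const card_ord mulr_natl.
    rewrite -sE /Sb.
    apply: ler_sum => j _; case: (j == ord0) / eqP => [->|/eqP jn].
      by rewrite /= mulr0n mul0r sqr_ge0.
    rewrite /= mulr1n mul1r; have := Hb j jn; rewrite ler_norml => /andP[h1 h2].
    nra.
  apply: (final_real T tau (complex.Re (z ord0 ord0)) (complex.Im (z ord0 ord0)) Sa Sb T1 tT Sb1 Sa0 H0 (Hp ord0)).
  case: Hc => [h|[k [kn hk]]]; [by left|right].
  exists (complex.Re (z ord0 k)), (complex.Im (z ord0 k)); split; last split => //.
    rewrite /Sa (bigD1 k) //= kn /= mulr1n mul1r lerDl.
    by apply: sumr_ge0 => j _; rewrite mulr_ge0 ?ler0n ?sqr_ge0.
  have := Hb k kn; rewrite ler_norml => /andP[h1 h2]; nra.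
Qed.
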